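(* Let $d_1,\ldots,d_n\in\mathbb C[t,u]$ be the singular factors of $\phi$ and let $\psi:\mathbb P^1\to\mathbb P^1$, $(t':u')\mapsto(\alpha t'+\beta u':\delta t'+\gamma u')$ with $\alpha\gamma-\beta\delta\ne0$, be a linear change of coordinates, with associated graded ring isomorphism $\psi^\sharp:\mathbb C[t,u]\to\mathbb C[t',u']$, $t\mapsto(\gamma t'-\beta u')/(\alpha\gamma-\beta\delta)$, $u\mapsto(\delta t'-\alpha u')/(\alpha\gamma-\beta\delta)$. Then $\psi^\sharp(d_1),\ldots,\psi^\sharp(d_n)$ are the singular factors of the parameterization $\phi\circ\psi$ of $\mathcal C$.
   Context: Let $a,b,c\in\mathbb C[s,v]$ be homogeneous of the same degree $n\ge3$, $\gcd(a,b,c)=1$, with $\phi=(a:b:c):\mathbb P^1\to\mathbb P^2$ birational onto its image $\mathcal C$. A $\mu$-basis is a homogeneous basis $p,q$ (degrees $\mu\le n-\mu$) of the free syzygy module of $(a,b,c)$; $p_\phi(s,v;t,u)=\sum_ip_i(s,v)\,\phi_i(t,u)$, $q_\phi(s,v;t,u)=\sum_iq_i(s,v)\,\phi_i(t,u)$ where $(\phi_1,\phi_2,\phi_3)=(a,b,c)$. $S_{p_\phi,q_\phi}(t,u)$ is their $n\times n$ Sylvester matrix with respect to $(s,v)$. The singular factors of $\phi$ are homogeneous $d_1,\ldots,d_n\in\mathbb C[t,u]$ such that for each $i$, $d_n^{n-i+1}\cdots d_{i+1}^2d_i$ equals (up to nonzero constant) the gcd of the $(n+1-i)$-minors of $S_{p_\phi,q_\phi}(t,u)$.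 *)

(* Defs.v *)
From HB Require Import structures.
From mathcomp Require Import all_boot all_order all_algebra.
Set Implicit Arguments. Unset Strict Implicit. Unset Printing Implicit Defensive.
Import Order.TTheory GRing.Theory Num.Theory.
Local Open Scope ring_scope.

(* Bivariate polynomials over F are represented as {poly {poly F}}:
   p = \sum_i (p`_i) * Y^i with p`_i in F[X].  The coefficient of X^j Y^i
   is (p`_i)`_j.  For forms in C[s,v] we take X = s, Y = v; for forms in
   C[t,u] we take X = t, Y = u. *)

Section Defs.
Variable F : fieldType.
Local Notation P := {poly {poly F}}.
Local Notation T3 := {poly {poly {poly F}}}.

Definition cst2 (c : F) : P := c%:P%:P.

Definition varX : P := ('X : {poly F})%:P.
Definition varY : P := 'X.

Definition homog (n : nat) (p : P) : Prop :=
  forall i j : nat, (p`_i)`_j != 0 -> (i + j)%N = n.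

Definition homog3 (n : nat) (g : T3) : Prop :=
  forall i j k : nat, ((g`_i)`_j)`_k != 0 -> (i + j + k)%N = n.

Definition eval2 (p : P) (x y : P) : P :=
  \sum_(i < size p) \sum_(j < size p`_i) cst2 ((p`_i)`_j) * (x ^+ j * y ^+ i).

Definition eval3 (g : T3) (x0 y0 z0 : P) : P :=
  \sum_(i < size g) \sum_(j < size g`_i) \sum_(k < size (g`_i)`_j)
     cst2 (((g`_i)`_j)`_k) * (x0 ^+ k * y0 ^+ j * z0 ^+ i).

Definition lin_sub (al be de ga : F) (p : P) : P :=
  eval2 p (cst2 al * varX + cst2 be * varY) (cst2 de * varX + cst2 ga * varY).

Definition dvd2 (x y : P) : Prop := exists z : P, y = z * x.

Definition coprime3 (phi : 'I_3 -> P) : Prop :=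
  forall g : P, (forall k, dvd2 g (phi k)) -> g \is a GRing.unit.

(* phi = (a:b:c) is birational onto its image: there is a rational map
   (g0:g1) : C ---> P^1, given by forms of the same degree in x,y,z, with
   (g0:g1) o phi = id, i.e. g_k(a,b,c) = h * (s,v)_k for some h <> 0. *)
Definition birational (phi : 'I_3 -> P) : Prop :=
  exists (e : nat) (g0 g1 : T3) (h : P),
    [/\ homog3 e g0, homog3 e g1, h != 0,
        eval3 g0 (phi 0) (phi 1) (phi 2) = h * varX &
        eval3 g1 (phi 0) (phi 1) (phi 2) = h * varY].

Definition good_param (n : nat) (phi : 'I_3 -> P) : Prop :=
  [/\ (3 <= n)%N, (forall k, homog n (phi k)), coprime3 phi & birational phi].

Definition syz (phi : 'I_3 -> P) (h : 'I_3 -> P) : Prop :=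
  \sum_(k < 3) h k * phi k = 0.

Definition mu_basis (n : nat) (phi : 'I_3 -> P) (mu : nat)
    (p q : 'I_3 -> P) : Prop :=
  [/\ (mu <= n - mu)%N,
      (forall k, homog mu (p k)) /\ (forall k, homog (n - mu) (q k)),
      syz phi p /\ syz phi q,
      (forall h, syz phi h -> exists f g : P, forall k, h k = f * p k + g * q k) &
      (forall f g : P, (forall k, f * p k + g * q k = 0) -> f = 0 /\ g = 0)].

(* coefficient of s^(m-j) v^j in p_phi(s,v;t,u) = \sum_k p_k(s,v) phi_k(t,u);
   it is an element of F[t,u]. *)
Definition pcoef (phi : 'I_3 -> P) (m : nat) (p : 'I_3 -> P) (j : nat) : P :=
  \sum_(k < 3) cst2 (((p k)`_j)`_(m - j)) * phi k.

(* n x n Sylvester matrix (w.r.t. (s,v)) of a form f of degree mu and a form g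
   of degree n - mu, given by their coefficient sequences (indexed by the
   exponent of v). *)
Definition sylvester (n mu : nat) (f g : nat -> P) : 'M[P]_n :=
  \matrix_(i < n, j < n)
    if (i < n - mu)%N then
      (if (i <= j <= i + mu)%N then f (j - i)%N else 0)
    else
      (let i' := (i - (n - mu))%N in
       if (i' <= j <= i' + (n - mu))%N then g (j - i')%N else 0).

Definition S_phi (n : nat) (phi : 'I_3 -> P) (mu : nat) (p q : 'I_3 -> P)
  : 'M[P]_n := sylvester n mu (pcoef phi mu p) (pcoef phi (n - mu) q).

Definition gcd_minors (N r : nat) (A : 'M[P]_N) (D : P) : Prop :=
  (forall f g : 'I_r -> 'I_N, dvd2 D (\det (mxsub f g A))) /\
  (forall E : P, (forall f g : 'I_r -> 'I_N, dvd2 E (\det (mxsub f g A))) ->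
     dvd2 E D).

(* d_1..d_n (here d 0 .. d (n-1)) are the singular factors of phi (w.r.t. a
   mu-basis of phi): for each i, d_n^(n-i+1) ... d_(i+1)^2 d_i is the gcd of
   the (n+1-i)-minors of S_{p_phi,q_phi}.  With 0-based i this reads
   \prod_(i <= j < n) d_j^(j-i+1) = gcd of (n-i)-minors. *)
Definition singular_factors (n : nat) (phi : 'I_3 -> P) (d : 'I_n -> P)
  : Prop :=
  exists (mu : nat) (p q : 'I_3 -> P),
    [/\ mu_basis n phi mu p q,
        (forall i, exists e, homog e (d i)) &
        (forall i : 'I_n,
           gcd_minors (n - i) (S_phi n phi mu p q)
             (\prod_(j < n | (i <= j)%N) d j ^+ (j - i).+1))].

End Defs.

Arguments singular_factors {F} n phi d.
Arguments good_param {F} n phi.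

(* Main.v *)
Require Import Defs.
From HB Require Import structures.
From mathcomp Require Import all_boot all_order all_algebra.
From mathcomp Require Import fingroup perm.
From Stdlib Require Import Lia FunctionalExtensionality.
Import GRing.Theory.
Local Open Scope ring_scope.

Set Implicit Arguments. Unset Strict Implicit. Unset Printing Implicit Defensive.

Ltac nlia := unfold addn, subn, muln, addn_rec, subn_rec, muln_rec in *; lia.


Section Basics.
Variable F : fieldType.
Local Notation P := {poly {poly F}}.

Definition cc : {rmorphism F -> P} := (polyC \o polyC)%FUN.
Lemma cr (x : P) : commr_rmorph cc x. Proof. by move=> a; apply: mulrC. Qed.
Definition tau (x : P) : {rmorphism {poly F} -> P} := horner_morph (cr x).
Lemma cr2 (x y : P) : commr_rmorph (tau x) y. Proof. by move=> a; apply: mulrC. Qed.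
Definition ev (x y : P) : {rmorphism P -> P} := horner_morph (cr2 x y).

Lemma ccE c : cc c = cst2 c. Proof. by []. Qed.

Lemma ev_cst2 (x y : P) (c : F) : ev x y (cst2 c) = cst2 c.
Proof. by rewrite /ev /cst2 /= horner_morphC /tau /= horner_morphC. Qed.

Lemma ev_varX x y : ev x y (varX F) = x.
Proof. by rewrite /ev /varX /= horner_morphC /tau /= horner_morphX. Qed.

Lemma ev_varY x y : ev x y (varY F) = y.
Proof. by rewrite /ev /varY /= horner_morphX. Qed.

Lemma size_map_le (aR rR : nzSemiRingType) (f : aR -> rR) (p : {poly aR}) :
  (size (map_poly f p) <= size p)%N.
Proof. exact: size_poly. Qed.

Lemma eval2E p x y : eval2 p x y = ev x y p.
Proof.
rewrite /ev /= /horner_morph (horner_coef_wide _ (size_map_le _ _)).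
apply: eq_bigr => i _; rewrite coef_map_id0 /=; last by rewrite map_poly0 horner0.
rewrite (horner_coef_wide _ (size_map_le _ _)) mulr_suml.
apply: eq_bigr => j _; by rewrite coef_map_id0 //= mulrA.
Qed.


Lemma ev_comp (rho : {rmorphism P -> P}) x y p :
  (forall c, rho (cst2 c) = cst2 c) -> rho (ev x y p) = ev (rho x) (rho y) p.
Proof.
move=> Hc; rewrite -!eval2E /eval2 rmorph_sum; apply: eq_bigr => i _.
rewrite rmorph_sum; apply: eq_bigr => j _.
by rewrite !rmorphM !rmorphXn Hc.
Qed.

Lemma ev_id p : ev (varX F) (varY F) p = p.
Proof.
rewrite -eval2E /eval2 -[RHS]coefK poly_def; apply: eq_bigr => i _.
rewrite -mul_polyC /varY.
under eq_bigr => j _ do rewrite mulrA.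
rewrite -mulr_suml; congr (_ * _).
rewrite -[X in X%:P]coefK poly_def rmorph_sum; apply: eq_bigr => j _.
by rewrite /cst2 /varX -mul_polyC rmorphM rmorphXn.
Qed.

Lemma coef2_sum (I : Type) (r : seq I) (Pr : pred I) (f : I -> P) a b :
  ((\sum_(i <- r | Pr i) f i)`_a)`_b = \sum_(i <- r | Pr i) ((f i)`_a)`_b.
Proof. by rewrite !coef_sum. Qed.

Lemma coef2_cst2M (c : F) (h : P) a b : ((cst2 c * h)`_a)`_b = c * (h`_a)`_b.
Proof. by rewrite /cst2 coefCM coefCM. Qed.

Lemma coef2_mono (i j a b : nat) :
  (((varX F) ^+ i * (varY F) ^+ j)`_a)`_b = ((a == j) && (b == i))%:R.
Proof.
rewrite /varX /varY -rmorphXn coefMXn /=.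
case: ltnP => Ha.
  by rewrite coef0; case: eqP => // E; rewrite E ltnn in Ha.
rewrite coefC; case: eqP => E.
  have -> : a = j by apply/eqP; rewrite eqn_leq Ha -subn_eq0 E.
  by rewrite eqxx coefXn.
rewrite coef0; case: eqP => // E2; by rewrite E2 subnn in E.
Qed.


Lemma homog0 m : homog m (0 : P).
Proof. by move=> a b; rewrite !coef0 eqxx. Qed.

Lemma homogD m (p q : P) : homog m p -> homog m q -> homog m (p + q).
Proof.
move=> hp hq a b; rewrite !coefD.
have [E|E] := eqVneq (p`_a`_b) 0; first by rewrite E add0r; apply: hq.
by move=> _; apply: hp.
Qed.

Lemma homog_sum m (I : Type) (r : seq I) (Pr : pred I) (f : I -> P) :
  (forall i, Pr i -> homog m (f i)) -> homog m (\sum_(i <- r | Pr i) f i).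
Proof.
move=> H; apply: (big_ind (homog m)); [exact: homog0 | exact: homogD | exact: H].
Qed.

Lemma homog_cst2M m (c : F) (p : P) : homog m p -> homog m (cst2 c * p).
Proof.
move=> hp a b; rewrite coef2_cst2M mulf_eq0 negb_or => /andP[_]; exact: hp.
Qed.

Lemma homog_mono i j : homog (i + j) ((varX F) ^+ i * (varY F) ^+ j).
Proof.
move=> a b; rewrite coef2_mono.
case: (a =P j) => [->|_]; last by rewrite /= eqxx.
case: (b =P i) => [-> _|_]; last by rewrite /= eqxx.
by rewrite addnC.
Qed.

Lemma homogM m k (p q : P) : homog m p -> homog k q -> homog (m + k) (p * q).
Proof.
move=> hp hq a b Hne; apply/eqP; apply: contraR Hne => Hab.
rewrite coefM coef_sum big1 // => l _; rewrite coefM big1 // => t _.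
have [Hp|Hp] := eqVneq (p`_l`_t) 0; first by rewrite Hp mul0r.
have [Hq|Hq] := eqVneq (q`_(a - l)`_(b - t)) 0; first by rewrite Hq mulr0.
exfalso; move: (hp _ _ Hp) (hq _ _ Hq) (ltn_ord l) (ltn_ord t).
move/eqP: Hab => Hab.
move=> H1 H2 /leP H3 /leP H4; apply: Hab; nlia.
Qed.

Lemma homog1 : homog 0 (1 : P).
Proof.
by have := @homog_mono 0 0; rewrite !expr0 mulr1.
Qed.

Lemma homogX m e (p : P) : homog m p -> homog (m * e) (p ^+ e).
Proof.
move=> hp; elim: e => [|e IH]; first by rewrite expr0 muln0; exact: homog1.
by rewrite exprS mulnS; apply: homogM.
Qed.

Lemma homog_eval2 m (p x y : P) :
  homog m p -> homog 1 x -> homog 1 y -> homog m (eval2 p x y).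
Proof.
move=> hp hx hy; apply: homog_sum => i _; apply: homog_sum => j _.
have [E|E] := eqVneq ((p`_i)`_j) 0.
  by rewrite E /cst2 !rmorph0 mul0r; exact: homog0.
apply: homog_cst2M; rewrite -(hp _ _ E) addnC.
have := homogM (homogX (e:=j) hx) (homogX (e:=i) hy).
by rewrite !mul1n.
Qed.

Lemma homog_varX : homog 1 (varX F).
Proof.
have := @homog_mono 1 0; by rewrite expr1 expr0 mulr1.
Qed.

Lemma homog_varY : homog 1 (varY F).
Proof.
have := @homog_mono 0 1; by rewrite expr1 expr0 mul1r.
Qed.

Lemma homog_lin (a b : F) : homog 1 (cst2 a * varX F + cst2 b * varY F).
Proof.
by apply: homogD; apply: homog_cst2M; [exact: homog_varX | exact: homog_varY].
Qed.

Lemma homog_lin_sub m (al be de ga : F) (p : P) :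
  homog m p -> homog m (lin_sub al be de ga p).
Proof. by move=> hp; apply: homog_eval2 => //; exact: homog_lin. Qed.


Lemma lin_subE (al be de ga : F) (p : P) :
  lin_sub al be de ga p =
  ev (cst2 al * varX F + cst2 be * varY F) (cst2 de * varX F + cst2 ga * varY F) p.
Proof. by rewrite /lin_sub eval2E. Qed.

Lemma lin_sub_cst2 (al be de ga c : F) : lin_sub al be de ga (cst2 c) = cst2 c.
Proof. by rewrite lin_subE ev_cst2. Qed.

Lemma cst2D (a b : F) : cst2 (a + b) = cst2 a + cst2 b :> P.
Proof. by rewrite /cst2 !rmorphD. Qed.
Lemma cst2M (a b : F) : cst2 (a * b) = cst2 a * cst2 b :> P.
Proof. by rewrite /cst2 !rmorphM. Qed.
Lemma cst2_1 : cst2 (1 : F) = 1 :> P. Proof. by rewrite /cst2 !rmorph1. Qed.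
Lemma cst2_0 : cst2 (0 : F) = 0 :> P. Proof. by rewrite /cst2 !rmorph0. Qed.

Lemma lin_comb (a b a' b' d' g' : F) :
  cst2 a * (cst2 a' * varX F + cst2 b' * varY F) +
  cst2 b * (cst2 d' * varX F + cst2 g' * varY F) =
  cst2 (a * a' + b * d') * varX F + cst2 (a * b' + b * g') * varY F.
Proof.
rewrite !mulrDr !cst2D !mulrDl !cst2M !mulrA.
by rewrite -!addrA; congr (_ + _); rewrite !addrA; congr (_ + _); rewrite addrC.
Qed.

Lemma lin_sub_comp (al be de ga a' b' d' g' : F) (p : P) :
  lin_sub a' b' d' g' (lin_sub al be de ga p) =
  lin_sub (al * a' + be * d') (al * b' + be * g') (de * a' + ga * d')
          (de * b' + ga * g') p.
Proof.
rewrite (lin_subE al be de ga p) {1}lin_subE ev_comp; last by move=> c; rewrite ev_cst2.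
rewrite !rmorphD !rmorphM !ev_cst2 !ev_varX !ev_varY.
by rewrite !lin_comb -lin_subE.
Qed.

Lemma lin_sub_id (p : P) : lin_sub 1 0 0 1 p = p.
Proof.
by rewrite lin_subE cst2_1 cst2_0 !mul1r !mul0r addr0 add0r ev_id.
Qed.

Section Inv.
Variables al be de ga : F.
Hypothesis hD : al * ga - be * de != 0.
Let D := al * ga - be * de.
Definition ia := ga / D.
Definition ib := - be / D.
Definition i_d := - de / D.
Definition ig := al / D.

Lemma DD : D / D = 1. Proof. exact: divff. Qed.

Lemma lin_sub_inv1 (p : P) : lin_sub ia ib i_d ig (lin_sub al be de ga p) = p.
Proof.
rewrite lin_sub_comp /ia /ib /i_d /ig !mulNr !mulrN !mulrA.
have -> : al * ga / D + - (be * de / D) = 1 by rewrite -mulrBl DD.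
have -> : - (al * be / D) + be * al / D = 0 by rewrite (mulrC be al) addNr.
have -> : de * ga / D + - (ga * de / D) = 0 by rewrite (mulrC de ga) addrN.
have -> : - (de * be / D) + ga * al / D = 1.
  by rewrite addrC -mulrBl (mulrC ga al) (mulrC de be) DD.
exact: lin_sub_id.
Qed.

Lemma lin_sub_inv2 (p : P) : lin_sub al be de ga (lin_sub ia ib i_d ig p) = p.
Proof.
rewrite lin_sub_comp /ia /ib /i_d /ig !mulNr !(mulrC (_ / D)) !mulrA.
have -> : al * ga / D - de * be / D = 1 by rewrite -mulrBl (mulrC de be) DD.
have -> : be * ga / D - ga * be / D = 0 by rewrite (mulrC be ga) addrN.
have -> : - (al * de / D) + de * al / D = 0 by rewrite (mulrC de al) addNr.
have -> : - (be * de / D) + ga * al / D = 1.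
  by rewrite addrC -mulrBl (mulrC ga al) DD.
exact: lin_sub_id.
Qed.
End Inv.

End Basics.

Section Minors.
Variable R : comPzRingType.

Lemma det_mul_rect (r N : nat) (B : 'M[R]_(r, N)) (A : 'M[R]_(N, r)) :
  \det (B *m A) =
  \sum_(h : {ffun 'I_r -> 'I_N}) (\prod_i B i (h i)) * \det (rowsub h A).
Proof.
rewrite /determinant.
have E : forall s : 'S_r, \prod_i (B *m A) i (s i) =
   \sum_(h : {ffun 'I_r -> 'I_N}) \prod_i (B i (h i) * A (h i) (s i)).
  by move=> s; rewrite -(bigA_distr_bigA (fun i k => B i k * A k (s i))); apply: eq_bigr => i _; rewrite mxE.
under eq_bigr => s _ do rewrite E mulr_sumr.
rewrite exchange_big /=; apply: eq_bigr => h _.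
rewrite mulr_sumr; apply: eq_bigr => s _.
rewrite big_split /= mulrCA; congr (_ * (_ * _)).
by apply: eq_bigr => i _; rewrite mxE.
Qed.

End Minors.

Section MinorsP.
Variable F : fieldType.
Local Notation P := {poly {poly F}}.

Lemma dvd2_mull (E x c : P) : dvd2 E x -> dvd2 E (c * x).
Proof. by case=> z ->; exists (c * z); rewrite mulrA. Qed.

Lemma dvd2_sum (I : Type) (r : seq I) (Pr : pred I) (E : P) (f : I -> P) :
  (forall i, Pr i -> dvd2 E (f i)) -> dvd2 E (\sum_(i <- r | Pr i) f i).
Proof.
move=> H; apply: (big_ind (dvd2 E)).
- by exists 0; rewrite mul0r.
- by move=> x y [zx ->] [zy ->]; exists (zx + zy); rewrite mulrDl.
- exact: H.
Qed.

Lemma dvd2_refl (E : P) : dvd2 E E. Proof. by exists 1; rewrite mul1r. Qed.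

Lemma dvd2_trans (x y z : P) : dvd2 x y -> dvd2 y z -> dvd2 x z.
Proof. by case=> a -> [b ->]; exists (b * a); rewrite mulrA. Qed.

Lemma minorsL (r N : nat) (C A : 'M[P]_N) (E : P) :
  (forall f g : 'I_r -> 'I_N, dvd2 E (\det (mxsub f g A))) ->
  (forall f g : 'I_r -> 'I_N, dvd2 E (\det (mxsub f g (C *m A)))).
Proof.
move=> H f g; rewrite mxsub_mul det_mul_rect.
apply: dvd2_sum => h _; apply: dvd2_mull.
have -> : rowsub h (colsub g A) = mxsub h g A by apply/matrixP => i j; rewrite !mxE.
exact: H.
Qed.

Lemma mxsub_tr (r N : nat) (A : 'M[P]_N) (f g : 'I_r -> 'I_N) :
  (mxsub f g A)^T = mxsub g f A^T.
Proof. by apply/matrixP => i j; rewrite !mxE. Qed.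

Lemma minorsT (r N : nat) (A : 'M[P]_N) (E : P) :
  (forall f g : 'I_r -> 'I_N, dvd2 E (\det (mxsub f g A))) ->
  (forall f g : 'I_r -> 'I_N, dvd2 E (\det (mxsub f g A^T))).
Proof. by move=> H f g; rewrite -mxsub_tr det_tr. Qed.

Lemma minorsLR (r N : nat) (L A R : 'M[P]_N) (E : P) :
  (forall f g : 'I_r -> 'I_N, dvd2 E (\det (mxsub f g A))) ->
  (forall f g : 'I_r -> 'I_N, dvd2 E (\det (mxsub f g (L *m A *m R)))).
Proof.
move=> H; have H1 := minorsL L H.
have H2 := minorsL R^T (minorsT H1).
move=> f g; have := minorsT H2 f g.
by rewrite trmx_mul !trmxK.
Qed.

End MinorsP.


Ltac to_prop := repeat match goal with
 | H : is_true (_ && _) |- _ => move/andP: H => [? ?]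
 | H : (_ && _) = true |- _ => move/andP: H => [? ?]
 | H : (?a && ?b) = false |- _ => move/negbT: H; rewrite negb_and => /orP H
 | H : is_true (~~ (?a <= ?b)%N) |- _ => rewrite -ltnNge in H
 | H : is_true (?a <= ?b)%N |- _ => move/leP: H => H
 | H : (?a <= ?b)%N = true |- _ => move/leP: H => H
 | H : (?a <= ?b)%N = false |- _ => move/negbT: H; rewrite -ltnNge => H
 | H : (_ \/ _) |- _ => case: H => H
 end.

Section Core.
Variable F : fieldType.
Local Notation P := {poly {poly F}}.

Definition cv (N : nat) (h : P) (j : nat) : F := (h`_j)`_(N - j).
Definition mono (N j : nat) : P := varX F ^+ (N - j) * varY F ^+ j.

Lemma homog_monoN N j : (j <= N)%N -> homog N (mono N j).
Proof. by move=> H; have := @homog_mono F (N - j) j; rewrite subnK. Qed.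

Lemma hdec N (h : P) : homog N h ->
  h = \sum_(j < N.+1) cst2 (cv N h j) * mono N j.
Proof.
move=> hh; apply/polyP => a; apply/polyP => b.
rewrite coef2_sum.
under eq_bigr => j _ do rewrite coef2_cst2M /mono coef2_mono.
have [Hab|Hab] := boolP ((a <= N) && (b == N - a))%N.
  case/andP: Hab => Ha /eqP Hb.
  rewrite (bigD1 (Ordinal (Ha : (a < N.+1)%N))) //= big1 ?addr0.
    by rewrite /cv eqxx Hb eqxx mulr1.
  move=> j Hj; case: (a =P j) => E; last by rewrite /= mulr0.
  by exfalso; move: Hj; rewrite -val_eqE /= E eqxx.
rewrite big1; last first.
  move=> j _; case: (a =P j) => E; last by rewrite /= mulr0.
  case: (b =P (N - j)%N) => E2; last by rewrite /= mulr0.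
  by exfalso; move: Hab; rewrite E E2 eqxx -ltnS ltn_ord.
have [E|E] := eqVneq (h`_a`_b) 0; first by [].
exfalso; have := hh _ _ E => Hs; move: Hab; rewrite -Hs leq_addr /=.
by rewrite addKn eqxx.
Qed.


Lemma coef2_monoM (a b : nat) (h : P) j k :
  ((varX F ^+ a * varY F ^+ b * h)`_j)`_k =
  if (b <= j)%N && (a <= k)%N then (h`_(j - b))`_(k - a) else 0.
Proof.
rewrite -mulrA mulrCA /varY coefXnM.
case: ltnP => Hj /=; first by rewrite coef0.
by rewrite /varX -rmorphXn coefCM coefXnM; case: ltnP.
Qed.

Definition Mono n mu (i : nat) : P :=
  if (i < n - mu)%N then mono (n - mu - 1) i else mono (mu - 1) (i - (n - mu)).
Definition Mr n mu (i : nat) (f g : P) : P :=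
  Mono n mu i * (if (i < n - mu)%N then f else g).
Definition SyF N mu (f g : P) : 'M[F]_N.+1 :=
  \matrix_(i < N.+1, j < N.+1) cv N (Mr N.+1 mu i f g) j.
Definition SyP n mu (f g : P) : 'M[P]_n :=
  sylvester n mu (fun l => cst2 (cv mu f l)) (fun l => cst2 (cv (n - mu) g l)).

Lemma SyP_F N mu (f g : P) : (mu <= N.+1)%N ->
  SyP N.+1 mu f g = map_mx (@cst2 F) (SyF N mu f g).
Proof.
move=> Hmu; apply/matrixP => i j; rewrite !mxE /Mr /Mono /mono.
have Hi := ltn_ord i; have Hj := ltn_ord j.
case: ifP => Hi1; rewrite /cv coef2_monoM.
  case: ifP => H1; case: ifP => H2; rewrite ?cst2_0 //; to_prop;
    try (exfalso; nlia).
  congr (cst2 (_`__)); nlia.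
case: ifP => H1; case: ifP => H2; rewrite ?cst2_0 //; to_prop;
  try (exfalso; nlia).
congr (cst2 (_`__)); nlia.
Qed.

Section Sigma.
Variables (sig sig' : {rmorphism P -> P}).
Hypothesis hc : forall c, sig (cst2 c) = cst2 c.
Hypothesis hh' : forall m h, homog m h -> homog m (sig' h).
Hypothesis hinv : forall h, sig (sig' h) = h.

Lemma cv_cst2M N c (h : P) j : cv N (cst2 c * h) j = c * cv N h j.
Proof. by rewrite /cv coef2_cst2M. Qed.

Lemma cv_sum N (I : Type) (r : seq I) (Pr : pred I) (f : I -> P) j :
  cv N (\sum_(i <- r | Pr i) f i) j = \sum_(i <- r | Pr i) cv N (f i) j.
Proof. by rewrite /cv coef2_sum. Qed.

Lemma cv_sig N (h : P) l : homog N h ->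
  cv N (sig h) l = \sum_(j < N.+1) cv N h j * cv N (sig (mono N j)) l.
Proof.
move=> hh; rewrite {1}(hdec hh) rmorph_sum cv_sum; apply: eq_bigr => j _.
by rewrite rmorphM hc cv_cst2M.
Qed.


Definition Lc n mu (i i2 : nat) : F :=
  if (i < n - mu)%N then
    (if (i2 < n - mu)%N then cv (n - mu - 1) (sig' (mono (n - mu - 1) i)) i2 else 0)
  else
    (if (i2 < n - mu)%N then 0
     else cv (mu - 1) (sig' (mono (mu - 1) (i - (n - mu)))) (i2 - (n - mu))).

Lemma hdec_nat K (h : P) : homog K h ->
  h = \sum_(0 <= j < K.+1) cst2 (cv K h j) * mono K j.
Proof. by move=> hh; rewrite big_mkord -hdec. Qed.

Lemma sum_shift (G : nat -> P) (a n : nat) :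
  \sum_(a <= i < n) G i = \sum_(0 <= j < n - a) G (j + a).
Proof. by rewrite -{1}(add0n a) big_addn. Qed.

Lemma claimC n mu (f g : P) (i : nat) : (mu <= n)%N -> (i < n)%N ->
  sig' (Mono n mu i) * (if (i < n - mu)%N then f else g) =
  \sum_(i2 < n) cst2 (Lc n mu i i2) * Mr n mu i2 f g.
Proof.
move=> Hmu Hi; have HiP : (i < n)%coq_nat by apply/leP.
have HmuP : (mu <= n)%coq_nat by apply/leP.
rewrite -(big_mkord xpredT (fun i2 => cst2 (Lc n mu i i2) * Mr n mu i2 f g)).
rewrite (big_cat_nat (n := n - mu)) ?leq0n ?leq_subr //=.
rewrite /Mono /Lc; case: ifP => Hi1.
  have hm : homog (n - mu - 1) (mono (n - mu - 1) i).
    by apply: homog_monoN; move/leP: Hi1 => ?; apply/leP; nlia.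
  rewrite {1}(hdec_nat (hh' hm)).
  have -> : (n - mu - 1).+1 = (n - mu)%N by move/leP: Hi1 => ?; nlia.
  rewrite mulr_suml [X in _ = _ + X]big1_seq ?addr0; last first.
    move=> j /andP[_]; rewrite mem_index_iota => /andP[Hj _].
    by rewrite ltnNge Hj /= cst2_0 mul0r.
  apply: eq_big_nat => j /andP[_ Hj].
  by rewrite Hj /Mr /Mono Hj -mulrA.
have Hmu1 : (0 < mu)%N by move/negbT: Hi1; rewrite -leqNgt => /leP ?; apply/leP; nlia.
have hm : homog (mu - 1) (mono (mu - 1) (i - (n - mu))).
  by apply: homog_monoN; move/negbT: Hi1; rewrite -leqNgt => /leP ?; apply/leP; nlia.
rewrite {1}(hdec_nat (hh' hm)).
have -> : (mu - 1).+1 = mu by move/leP: Hmu1 => ?; nlia.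
rewrite mulr_suml [X in _ = X + _]big1_seq ?add0r; last first.
  move=> j /andP[_]; rewrite mem_index_iota => /andP[_ Hj].
  by rewrite Hj /= cst2_0 mul0r.
rewrite [in RHS]sum_shift.
have -> : (n - (n - mu))%N = mu by rewrite subKn.
apply: eq_big_nat => j /andP[_ Hj].
have -> : (j + (n - mu) < n - mu)%N = false by rewrite ltnNge leq_addl.
by rewrite addnK /Mr /Mono ltnNge leq_addl /= addnK -mulrA.
Qed.


Definition LF N mu : 'M[F]_N.+1 := \matrix_(i < N.+1, i2 < N.+1) Lc N.+1 mu i i2.
Definition RF N : 'M[F]_N.+1 := \matrix_(j < N.+1, l < N.+1) cv N (sig (mono N j)) l.

Lemma homog_eqn m k (p : P) : m = k -> homog m p -> homog k p.
Proof. by move=> ->. Qed.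

Lemma homog_Mr N mu (f g : P) i : (mu <= N.+1)%N -> (i < N.+1)%N ->
  homog mu f -> homog (N.+1 - mu) g -> homog N (Mr N.+1 mu i f g).
Proof.
move=> Hmu Hi hf hg; move/leP: Hmu => Hmu; move/leP: Hi => Hi.
rewrite /Mr /Mono; case: ifP => H.
  apply: (@homog_eqn ((N.+1 - mu - 1) + mu)%N); first by move/leP: H => ?; nlia.
  apply: homogM => //; apply: homog_monoN; move/leP: H => ?; apply/leP; nlia.
move/negbT: H; rewrite -leqNgt => /leP H.
apply: (@homog_eqn ((mu - 1) + (N.+1 - mu))%N); first by nlia.
apply: homogM => //; apply: homog_monoN; apply/leP; nlia.
Qed.

Lemma core N mu (f g : P) : (mu <= N.+1)%N -> homog mu f -> homog (N.+1 - mu) g ->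
  SyF N mu (sig f) (sig g) = LF N mu *m SyF N mu f g *m RF N.
Proof.
move=> Hmu hf hg; apply/matrixP => i l; rewrite !mxE.
have -> : Mr N.+1 mu i (sig f) (sig g) =
          sig (sig' (Mono N.+1 mu i) * (if (i < N.+1 - mu)%N then f else g)).
  by rewrite rmorphM hinv /Mr; case: ifP.
rewrite claimC // rmorph_sum cv_sum.
under eq_bigr => i2 _ do rewrite rmorphM hc cv_cst2M (cv_sig _ (homog_Mr Hmu (ltn_ord i2) hf hg)).
under [RHS]eq_bigr => j _ do rewrite mxE mulr_suml.
rewrite exchange_big /=; apply: eq_bigr => i2 _.
rewrite mulr_sumr; apply: eq_bigr => j _.
by rewrite !mxE mulrA.
Qed.

End Sigma.

End Core.

Section Transfer.
Variable F : fieldType.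
Local Notation P := {poly {poly F}}.

Lemma S_phi_entry n (phi : 'I_3 -> P) mu (p q : 'I_3 -> P) i j :
  S_phi n phi mu p q i j = \sum_(k < 3) phi k * SyP n mu (p k) (q k) i j.
Proof.
rewrite /S_phi /SyP /sylvester !mxE.
under [RHS]eq_bigr => k _ do rewrite mxE.
case: ifP => _; case: ifP => _;
  try (by rewrite big1 // => k _; rewrite mulr0);
  by rewrite /pcoef; apply: eq_bigr => k _; rewrite mulrC.
Qed.

Lemma map_cst2_cc n (M : 'M[F]_n) : map_mx (@cst2 F) M = map_mx (cc F) M.
Proof. by apply/matrixP => i j; rewrite !mxE. Qed.

Variables (sig sig' : {rmorphism P -> P}).
Hypothesis hc : forall c, sig (cst2 c) = cst2 c.
Hypothesis hh' : forall m h, homog m h -> homog m (sig' h).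
Hypothesis hinv : forall h, sig (sig' h) = h.

Lemma transfer N mu (phi p q : 'I_3 -> P) : (mu <= N.+1)%N ->
  (forall k, homog mu (p k)) -> (forall k, homog (N.+1 - mu) (q k)) ->
  S_phi N.+1 (fun k => sig (phi k)) mu (fun k => sig (p k)) (fun k => sig (q k)) =
  map_mx (cc F) (LF sig' N mu) *m map_mx sig (S_phi N.+1 phi mu p q)
    *m map_mx (cc F) (RF sig N).
Proof.
move=> Hmu hp hq.
have E1 : S_phi N.+1 (fun k => sig (phi k)) mu (fun k => sig (p k)) (fun k => sig (q k))
   = \sum_(k < 3) sig (phi k) *: (map_mx (cc F) (LF sig' N mu) *m
        map_mx (cc F) (SyF N mu (p k) (q k)) *m map_mx (cc F) (RF sig N)).
  apply/matrixP => i j; rewrite S_phi_entry summxE; apply: eq_bigr => k _.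
  rewrite SyP_F // map_cst2_cc (core hc hh' hinv Hmu (hp k) (hq k)) !map_mxM.
  by rewrite [in RHS]mxE.
have E2 : map_mx sig (S_phi N.+1 phi mu p q) =
   \sum_(k < 3) sig (phi k) *: map_mx (cc F) (SyF N mu (p k) (q k)).
  apply/matrixP => i j; rewrite mxE S_phi_entry rmorph_sum summxE.
  apply: eq_bigr => k _; rewrite SyP_F // map_cst2_cc !mxE rmorphM ccE hc.
  by [].
rewrite E1 E2 mulmx_sumr mulmx_suml; apply: eq_bigr => k _.
by rewrite scalemxAl scalemxAr.
Qed.

End Transfer.

Lemma dvd2_rmorph (F : fieldType) (s : {rmorphism {poly {poly F}} -> {poly {poly F}}})
  (x y : {poly {poly F}}) : dvd2 x y -> dvd2 (s x) (s y).
Proof. by case=> z ->; exists (s z); rewrite rmorphM. Qed.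

Lemma transfer2 (F : fieldType) (sig sig' : {rmorphism {poly {poly F}} -> {poly {poly F}}})
  (hc : forall c, sig (cst2 c) = cst2 c)
  (hh' : forall m h, homog m h -> homog m (sig' h))
  (hinv : forall h, sig (sig' h) = h)
  N mu (phi p q phi' p' q' : 'I_3 -> {poly {poly F}}) : (mu <= N.+1)%N ->
  (forall k, homog mu (p k)) -> (forall k, homog (N.+1 - mu) (q k)) ->
  (forall k, phi' k = sig (phi k)) -> (forall k, p' k = sig (p k)) ->
  (forall k, q' k = sig (q k)) ->
  S_phi N.+1 phi' mu p' q' =
  map_mx (cc F) (LF sig' N mu) *m map_mx sig (S_phi N.+1 phi mu p q)
    *m map_mx (cc F) (RF sig N).
Proof.
move=> Hmu hp hq E1 E2 E3.
have -> : phi' = (fun k => sig (phi k)) by apply: functional_extensionality.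
have -> : p' = (fun k => sig (p k)) by apply: functional_extensionality.
have -> : q' = (fun k => sig (q k)) by apply: functional_extensionality.
exact: transfer.
Qed.

Unset Implicit Arguments.

Theorem lemma3p3 (F : closedFieldType) (Fchar0 : [pchar F] =i pred0)
  (n : nat) (phi : 'I_3 -> {poly {poly F}}) (d : 'I_n -> {poly {poly F}})
  (al be de ga : F) :
  good_param n phi ->
  singular_factors n phi d ->
  al * ga - be * de != 0 ->
  singular_factors n (fun k => lin_sub al be de ga (phi k))
                     (fun i => lin_sub al be de ga (d i)).
Proof.
case: n d => [|N] d; first by case; rewrite ltn0.
move=> [Hn _ _ _] [mu [p [q [Hmb Hd Hg]]]] HD.
set sig := ev (cst2 al * varX F + cst2 be * varY F) (cst2 de * varX F + cst2 ga * varY F).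
set sig' := ev (cst2 (ia al be de ga) * varX F + cst2 (ib al be de ga) * varY F)
               (cst2 (i_d al be de ga) * varX F + cst2 (ig al be de ga) * varY F).
have lsE : forall h, lin_sub al be de ga h = sig h by move=> h; rewrite lin_subE.
have lsE' : forall h, lin_sub (ia al be de ga) (ib al be de ga) (i_d al be de ga)
    (ig al be de ga) h = sig' h by move=> h; rewrite lin_subE.
have hc : forall c, sig (cst2 c) = cst2 c by move=> c; rewrite ev_cst2.
have hc' : forall c, sig' (cst2 c) = cst2 c by move=> c; rewrite ev_cst2.
have hh : forall m h, homog m h -> homog m (sig h).
  by move=> m h hm; rewrite -lsE; apply: homog_lin_sub.
have hh' : forall m h, homog m h -> homog m (sig' h).
  by move=> m h hm; rewrite -lsE'; apply: homog_lin_sub.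
have inv1 : forall h, sig' (sig h) = h.
  by move=> h; rewrite -lsE -lsE' lin_sub_inv1.
have inv2 : forall h, sig (sig' h) = h.
  by move=> h; rewrite -lsE -lsE' lin_sub_inv2.
have -> : (fun k => lin_sub al be de ga (phi k)) = (fun k => sig (phi k)).
  by apply: functional_extensionality => k; rewrite lsE.
have -> : (fun i => lin_sub al be de ga (d i)) = (fun i => sig (d i)).
  by apply: functional_extensionality => k; rewrite lsE.
case: Hmb => Hle [hp hq] [sp sq] Hgen Hind.
exists mu, (fun k => sig (p k)), (fun k => sig (q k)); split.
- split => //.
  + by split => k; apply: hh.
  + split; rewrite /syz.
      by under eq_bigr => k _ do rewrite -rmorphM; rewrite -rmorph_sum sp rmorph0.
    by under eq_bigr => k _ do rewrite -rmorphM; rewrite -rmorph_sum sq rmorph0.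
  + move=> h Hh.
    have : syz phi (fun k => sig' (h k)).
      rewrite /syz; under eq_bigr => k _ do rewrite -[phi k]inv1 -rmorphM.
      by rewrite -rmorph_sum Hh rmorph0.
    case/Hgen => f [g Hfg]; exists (sig f), (sig g) => k.
    by rewrite -[h k]inv2 Hfg rmorphD !rmorphM.
  + move=> f g Hfg.
    have H0 : forall k, sig' f * p k + sig' g * q k = 0.
      by move=> k; rewrite -[p k]inv1 -[q k]inv1 -!rmorphM -rmorphD Hfg rmorph0.
    case: (Hind _ _ H0) => E1 E2.
    by rewrite -[f]inv2 -[g]inv2 E1 E2 rmorph0.
- by move=> i; case: (Hd i) => e he; exists e; apply: hh.
- move=> i.
  have Hmu : (mu <= N.+1)%N := leq_trans Hle (leq_subr _ _).
  have TL := transfer hc hh' inv2 phi Hmu hp hq.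
  have TR := transfer2 hc' hh inv1 (phi := fun k => sig (phi k))
     (p := fun k => sig (p k)) (q := fun k => sig (q k)) (phi' := phi) (p' := p) (q' := q) Hmu
     (fun k => hh _ _ (hp k)) (fun k => hh _ _ (hq k))
     (fun k => esym (inv1 (phi k))) (fun k => esym (inv1 (p k))) (fun k => esym (inv1 (q k))).
  have -> : \prod_(j < N.+1 | (i <= j)%N) sig (d j) ^+ (j - i).+1 =
            sig (\prod_(j < N.+1 | (i <= j)%N) d j ^+ (j - i).+1).
    by rewrite rmorph_prod; apply: eq_bigr => j _; rewrite rmorphXn.
  case: (Hg i) => G1 G2; split.
    rewrite TL; apply: minorsLR => f g.
    by rewrite -map_mxsub det_map_mx; apply: dvd2_rmorph; apply: G1.
  move=> E HE.
  have H1 : forall f g : 'I_(N.+1 - i) -> 'I_N.+1,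
      dvd2 (sig' E) (\det (mxsub f g (S_phi N.+1 phi mu p q))).
    rewrite TR; apply: minorsLR => f g.
    by rewrite -map_mxsub det_map_mx; apply: dvd2_rmorph; apply: HE.
  by have := dvd2_rmorph sig (G2 _ H1); rewrite inv2.
Qed.
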